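(* Let $(X,d)$ be a complete metric space, let $N\in\mathbb{N}\setminus\{0\}$, let $\alpha:X\times X\rightarrow[0,+\infty)$ be $N$--transitive, and let $T:X\rightarrow X$ be an $\alpha$--contractive mapping of Meir--Keeler type satisfying: (A1) $T$ is $\alpha$--admissible; (A2) there exists $x_{0}\in X$ such that $\alpha(x_{0},Tx_{0})\geq1$; (A4) $(X,d)$ is $(T,\alpha)$--regular. Then $T$ has a fixed point.
   Context: $\mathbb{N}$ is the set of non-negative integers; $T^n$ is the $n$-th iterate of $T$. $T$ is an $\alpha$--contractive mapping of Meir--Keeler type if for every $\varepsilon>0$ there exists $\delta(\varepsilon)>0$ such that for all $x,y\in X$: $\varepsilon\leq d(x,y)<\varepsilon+\delta(\varepsilon)$ implies $\alpha(x,y)d(Tx,Ty)<\varepsilon$. $T$ is $\alpha$--admissible if $\alpha(x,y)\geq1$ implies $\alpha(Tx,Ty)\geq1$. $\alpha$ is $N$--transitive if for all $x_0,\dots,x_{N+1}\in X$ with $\alpha(x_i,x_{i+1})\geq1$ for all $i\in\{0,\dots,N\}$ one has $\alpha(x_0,x_{N+1})\geq1$. A sequence $\{x_n\}$ is $(T,\alpha)$--orbital if $x_n=T^nx_0$ and $\alpha(x_n,x_{n+1})\geq1$ for all $n\in\mathbb{N}$. $(X,d)$ is $(T,\alpha)$--regular if for every $(T,\alpha)$--orbital sequence $\{x_n\}$ with $x_n\rightarrow x\in X$ there exists a subsequence $\{x_{n(k)}\}$ with $\alpha(x_{n(k)},x)\geq1$ for all $k$. *)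

(* Defs.v *)
From Stdlib Require Export Reals.
Open Scope R_scope.

Definition is_metric {X : Type} (d : X -> X -> R) : Prop :=
  (forall x y, 0 <= d x y) /\
  (forall x y, d x y = 0 <-> x = y) /\
  (forall x y, d x y = d y x) /\
  (forall x y z, d x z <= d x y + d y z).

Definition seq_converges {X : Type} (d : X -> X -> R) (u : nat -> X) (x : X) : Prop :=
  forall eps, 0 < eps -> exists n0 : nat, forall n, (n0 <= n)%nat -> d (u n) x < eps.

Definition cauchy_seq {X : Type} (d : X -> X -> R) (u : nat -> X) : Prop :=
  forall eps, 0 < eps -> exists n0 : nat,
    forall m n, (n0 <= m)%nat -> (n0 <= n)%nat -> d (u m) (u n) < eps.

Definition complete_metric {X : Type} (d : X -> X -> R) : Prop :=
  forall u : nat -> X, cauchy_seq d u -> exists x, seq_converges d u x.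

Definition alpha_MK_contractive {X : Type} (d : X -> X -> R) (alpha : X -> X -> R)
  (T : X -> X) : Prop :=
  forall eps, 0 < eps -> exists delta, 0 < delta /\
    forall x y, eps <= d x y -> d x y < eps + delta -> alpha x y * d (T x) (T y) < eps.

Definition alpha_admissible {X : Type} (alpha : X -> X -> R) (T : X -> X) : Prop :=
  forall x y, 1 <= alpha x y -> 1 <= alpha (T x) (T y).

(* N-transitivity: points x_0,...,x_{N+1} given as x 0, ..., x (N+1) *)
Definition N_transitive {X : Type} (N : nat) (alpha : X -> X -> R) : Prop :=
  forall x : nat -> X,
    (forall i, (i <= N)%nat -> 1 <= alpha (x i) (x (S i))) ->
    1 <= alpha (x 0%nat) (x (S N)).

Definition T_alpha_orbital {X : Type} (alpha : X -> X -> R) (T : X -> X) (x0 : X) : Prop :=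
  forall n : nat, 1 <= alpha (Nat.iter n T x0) (Nat.iter (S n) T x0).

Definition T_alpha_regular {X : Type} (d : X -> X -> R) (alpha : X -> X -> R)
  (T : X -> X) : Prop :=
  forall x0 x : X,
    T_alpha_orbital alpha T x0 ->
    seq_converges d (fun n => Nat.iter n T x0) x ->
    exists phi : nat -> nat, (forall k, (phi k < phi (S k))%nat) /\
      forall k, 1 <= alpha (Nat.iter (phi k) T x0) x.

(* Main.v *)
Require Import Defs.
From Stdlib Require Import Reals Lra Lia Psatz.
Open Scope R_scope.

Lemma L_contr (X : Type) (d : X -> X -> R) (alpha : X -> X -> R) (T : X -> X) :
  is_metric d -> alpha_MK_contractive d alpha T ->
  forall x y, 1 <= alpha x y -> d (T x) (T y) <= d x y /\ (0 < d x y -> d (T x) (T y) < d x y).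
Proof.
  intros [Hpos [Hid [Hsym Htri]]] HMK x y Ha.
  destruct (Req_dec (d x y) 0) as [H0|H0].
  - apply Hid in H0. subst y. assert (d (T x) (T x) = 0) by (apply Hid; auto).
    rewrite H, (proj2 (Hid x x) eq_refl). split; lra.
  - assert (Hp : 0 < d x y) by (specialize (Hpos x y); lra).
    destruct (HMK (d x y) Hp) as [del [Hdel Hm]].
    specialize (Hm x y (Rle_refl _) ltac:(lra)).
    specialize (Hpos (T x) (T y)).
    assert (d (T x) (T y) <= alpha x y * d (T x) (T y)) by nra.
    split; intros; lra.
Qed.

Theorem theorem3 (X : Type) (d : X -> X -> R) (N : nat) (alpha : X -> X -> R) (T : X -> X) :
  is_metric d ->
  complete_metric d ->
  (1 <= N)%nat ->
  (forall x y, 0 <= alpha x y) ->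
  N_transitive N alpha ->
  alpha_MK_contractive d alpha T ->
  alpha_admissible alpha T ->
  (exists x0, 1 <= alpha x0 (T x0)) ->
  T_alpha_regular d alpha T ->
  exists x, T x = x.
Proof.
  intros Hm Hcomp HN Hal0 Htr HMK Hadm [x0 Hx0] Hreg.
  pose proof Hm as [Hpos [Hid [Hsym Htri]]].
  pose proof (L_contr X d alpha T Hm HMK) as HL.
  set (x := fun n => Nat.iter n T x0).
  assert (HxS : forall n, x (S n) = T (x n)) by reflexivity.
  assert (Horb : forall n, 1 <= alpha (x n) (x (S n))).
  { induction n; [exact Hx0|]. rewrite !HxS. apply Hadm. rewrite <- HxS. exact IHn. }
  assert (Htrans : forall n j, 1 <= alpha (x n) (x (n + j * N + 1)%nat)).
  { intros n j; induction j.
    - replace (n + 0 * N + 1)%nat with (S n) by lia. apply Horb.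
    - set (y := fun i => match i with 0%nat => x n | _ => x (n + j * N + i)%nat end).
      specialize (Htr y).
      assert (E : y (S N) = x (n + S j * N + 1)%nat).
      { simpl. f_equal. lia. }
      rewrite <- E. apply Htr. intros i Hi. destruct i.
      + simpl. exact IHj.
      + simpl. replace (n + j * N + S (S i))%nat with (S (n + j*N + S i)) by lia. apply Horb. }
  set (dd := fun n => d (x n) (x (S n))).
  assert (Hdlim : forall e, 0 < e -> exists n0, forall k, (n0 <= k)%nat -> dd k < e).
  { assert (Hdec : Un_decreasing dd).
    { intro n. unfold dd. rewrite (HxS (S n)), (HxS n). apply (HL _ _ (Horb n)). }
    assert (Hlb : has_lb dd).
    { exists 0. intros z [i ->]. unfold opp_seq. specialize (Hpos (x i) (x (S i))). unfold dd. lra. }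
    destruct (decreasing_cv dd Hdec Hlb) as [r Hr].
    assert (Hge : forall n, r <= dd n).
    { intro n. destruct (Rle_lt_dec r (dd n)) as [|Hlt]; auto.
      destruct (Hr (r - dd n) ltac:(lra)) as [M HM].
      specialize (HM (Nat.max M n) ltac:(lia)). unfold Rdist in HM.
      assert (dd (Nat.max M n) <= dd n).
      { assert (forall k, dd (n + k)%nat <= dd n).
        { induction k. rewrite Nat.add_0_r; lra.
          replace (n + S k)%nat with (S (n+k)) by lia. specialize (Hdec (n+k)%nat). lra. }
        replace (Nat.max M n) with (n + (Nat.max M n - n))%nat by lia. auto. }
      apply Rabs_def2 in HM. lra. }
    assert (Hr0 : r <= 0).
    { destruct (Rle_lt_dec r 0) as [|Hrp]; auto.
      destruct (HMK r Hrp) as [del [Hdel Hmk]].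
      destruct (Hr del Hdel) as [M HM]. specialize (HM M ltac:(lia)).
      unfold Rdist in HM. apply Rabs_def2 in HM.
      specialize (Hmk (x M) (x (S M)) (Hge M) ltac:(unfold dd in HM; lra)).
      rewrite <- !HxS in Hmk.
      specialize (Hge (S M)). unfold dd in Hge.
      specialize (Horb M). specialize (Hpos (x (S M)) (x (S (S M)))). nra. }
    intros e He. destruct (Hr e He) as [M HM]. exists M. intros k Hk.
    specialize (HM k Hk). unfold Rdist in HM. apply Rabs_def2 in HM. lra. }
  assert (Hchain : forall e m k, (forall i, (m <= i)%nat -> dd i < e) ->
            d (x m) (x (m + k)%nat) <= INR k * e).
  { intros e m k He. induction k.
    - rewrite Nat.add_0_r, (proj2 (Hid _ _) eq_refl). simpl. lra.
    - replace (m + S k)%nat with (S (m + k)) by lia. rewrite S_INR.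
      specialize (Htri (x m) (x (m+k)%nat) (x (S (m+k)))).
      specialize (He (m+k)%nat ltac:(lia)). unfold dd in He. lra. }
  assert (HNpos : 0 < INR N) by (apply lt_0_INR; lia).
  assert (Hcau : cauchy_seq d x).
  { intros eps0 Heps0. set (eps := eps0 / 2).
    assert (Heps : 0 < eps) by (unfold eps; lra).
    destruct (HMK eps Heps) as [del [Hdel Hmk]].
    set (dl := Rmin del eps).
    assert (Hdl : 0 < dl) by (unfold dl; apply Rmin_glb_lt; lra).
    assert (Hdl1 : dl <= del) by apply Rmin_l.
    assert (Hdl2 : dl <= eps) by apply Rmin_r.
    set (e := dl / (2 * INR N)).
    assert (He : 0 < e) by (unfold e; apply Rdiv_lt_0_compat; lra).
    assert (HNe : INR N * e = dl / 2) by (unfold e; field; lra).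
    destruct (Hdlim e He) as [n0 Hn0].
    assert (HP : forall n j, (n0 <= n)%nat -> d (x n) (x (n + j * N + 1)%nat) < eps + dl / 2).
    { intros n j Hn. induction j.
      - replace (n + 0 * N + 1)%nat with (S n) by lia.
        specialize (Hn0 n Hn). unfold dd in Hn0.
        assert (e <= INR N * e) by (assert (1 <= INR N) by (apply (le_INR 1); lia); nra).
        lra.
      - set (a := x n). set (b := x (n + j * N + 1)%nat).
        assert (HTab : d (T a) (T b) < eps).
        { destruct (Rle_lt_dec eps (d a b)) as [Hge|Hlt].
          + specialize (Hmk a b Hge ltac:(unfold a, b; lra)).
            specialize (Htrans n j). fold a b in Htrans.
            specialize (Hpos (T a) (T b)). nra.
          + destruct (HL a b (Htrans n j)). lra. }
        unfold a, b in HTab. rewrite <- !HxS in HTab.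
        pose proof (Hchain e (S (n + j * N + 1)) (N - 1)%nat ltac:(intros i Hi; apply Hn0; lia)) as Hc.
        replace (S (n + j * N + 1) + (N - 1))%nat with (n + S j * N + 1)%nat in Hc by lia.
        rewrite minus_INR in Hc by lia. change (INR 1) with 1 in Hc.
        pose proof (Htri (x n) (x (S n)) (x (n + S j * N + 1)%nat)) as T1.
        pose proof (Htri (x (S n)) (x (S (n + j * N + 1))) (x (n + S j * N + 1)%nat)) as T2.
        replace (S n + j * N + 1)%nat with (S (n + j * N + 1)) in HTab by lia.
        specialize (Hn0 n Hn). unfold dd in Hn0. unfold a in *. lra. }
    exists n0. intros m n Hm' Hn'.
    assert (Hgen : forall n m, (n0 <= n)%nat -> (n <= m)%nat -> d (x n) (x m) < eps0).
    { clear m n Hm' Hn'. intros n m Hn Hnm.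
      destruct (Nat.eq_dec n m) as [<-|Hne].
      - rewrite (proj2 (Hid _ _) eq_refl). lra.
      - pose proof (Nat.div_mod (m - n - 1) N ltac:(lia)) as Hdm.
        pose proof (Nat.mod_upper_bound (m - n - 1) N ltac:(lia)) as Hub.
        set (j := ((m - n - 1) / N)%nat) in *. set (r := ((m - n - 1) mod N)%nat) in *.
        pose proof (HP n j Hn) as H1.
        pose proof (Hchain e (n + j * N + 1)%nat r ltac:(intros i Hi; apply Hn0; lia)) as H2.
        replace (n + j * N + 1 + r)%nat with m in H2 by lia.
        pose proof (Htri (x n) (x (n + j * N + 1)%nat) (x m)) as T1.
        assert (INR r * e <= INR N * e).
        { apply Rmult_le_compat_r; [lra|]. apply le_INR; lia. }
        unfold eps in *. lra. }
    destruct (Nat.le_ge_cases n m) as [Hle|Hle].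
    - rewrite Hsym. apply Hgen; auto.
    - apply Hgen; auto. }
  destruct (Hcomp x Hcau) as [xl Hxl].
  destruct (Hreg x0 xl Horb Hxl) as [phi [Hphi Hphia]].
  assert (Hphik : forall k, (k <= phi k)%nat).
  { induction k; [lia|]. specialize (Hphi k). lia. }
  exists xl.
  assert (Hsmall : forall eps, 0 < eps -> d xl (T xl) < eps).
  { intros eps Heps. destruct (Hxl (eps / 2) ltac:(lra)) as [n0 Hn0].
    pose proof (Hn0 (phi n0) (Hphik n0)) as A.
    pose proof (Hn0 (S (phi n0)) ltac:(specialize (Hphik n0); lia)) as B.
    destruct (HL _ _ (Hphia n0)) as [C _].
    change (Nat.iter (phi n0) T x0) with (x (phi n0)) in *.
    change (Nat.iter (S (phi n0)) T x0) with (x (S (phi n0))) in *.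
    rewrite <- HxS in C.
    pose proof (Htri xl (x (S (phi n0))) (T xl)). pose proof (Hsym xl (x (S (phi n0)))). lra. }
  assert (d xl (T xl) = 0).
  { destruct (Rle_lt_dec (d xl (T xl)) 0). specialize (Hpos xl (T xl)); lra.
    specialize (Hsmall _ r). lra. }
  apply Hid in H. auto.
Qed.
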